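(* Let $(q_n)$ be the Fibonacci Quilt sequence and for $n\ge1$ let $h_n$ be the number of integers $m\in[1,q_{n+1}-1]$ for which the greedy decomposition of $m$ is an FQ-legal decomposition. Then $h_k=k$ for $1\le k\le5$, and for all $n\ge6$, \[ h_n=h_{n-1}+h_{n-5}+1. \]
   Context: Given an increasing sequence of positive integers $(q_i)_{i\ge1}$, an FQ-legal decomposition of an integer $m\ge0$ is an expression $m=q_{\ell_1}+q_{\ell_2}+\cdots+q_{\ell_t}$ ($t\ge0$, the empty sum representing $0$) with distinct indices $\ell_1>\ell_2>\cdots>\ell_t$ such that $|\ell_i-\ell_j|\notin\{1,3,4\}$ for all $i,j$, and $\{1,3\}\not\subset\{\ell_1,\dots,\ell_t\}$. The Fibonacci Quilt sequence is the increasing sequence of positive integers $(q_i)_{i\ge1}$ in which each $q_i$ is the smallest positive integer having no FQ-legal decomposition using only $q_1,\dots,q_{i-1}$. Its first terms are $1,2,3,4,5,7,9,12,16,21,28,37,49,\dots$. The greedy decomposition of a positive integer $m$ is obtained by choosing the largest $q_k\le m$ as a summand and, if $m-q_k>0$, recursively appending the greedy decomposition of $m-q_k$; the greedy algorithm succeeds on $m$ if the resulting decomposition is FQ-legal. *)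

(* Defs.v *)
From mathcomp Require Import all_boot.
Set Implicit Arguments. Unset Strict Implicit. Unset Printing Implicit Defensive.

Fixpoint sublists (s : seq nat) : seq (seq nat) :=
  if s is x :: s' then
    let r := sublists s' in [seq x :: t | t <- r] ++ r
  else [:: [::]].

Definition FQ_legal (S : seq nat) : bool :=
  [&& uniq S, all (fun i => 0 < i) S,
      all (fun i => all (fun j =>
             [&& i - j != 1, i - j != 3 & i - j != 4]) S) S
    & ~~ ((1 \in S) && (3 \in S))].

(* l = [:: q_1; ...; q_k].  decomp_with l m : m has an FQ-legal decomposition
   using only q_1, ..., q_k (indices range over 1..k, q_i = nth 0 l i.-1). *)
Definition decomp_with (l : seq nat) (m : nat) : bool :=
  has (fun S => FQ_legal S && (sumn [seq nth 0 l i.-1 | i <- S] == m))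
      (sublists (iota 1 (size l))).

(* Smallest positive integer with no FQ-legal decomposition using l.
   The search over [1, 1 + sumn l] suffices, since 1 + sumn l exceeds
   every sum of distinct terms of l. *)
Definition next_FQ (l : seq nat) : nat :=
  (find (fun m => ~~ decomp_with l m) (iota 1 (sumn l).+1)).+1.

Fixpoint FQ_list (n : nat) : seq nat :=
  if n is n'.+1 then rcons (FQ_list n') (next_FQ (FQ_list n')) else [::].

(* The Fibonacci Quilt sequence, indexed from 1 (q 0 = 0 is a dummy). *)
Definition q (n : nat) : nat := nth 0 (FQ_list n) n.-1.

(* Index of the largest q_k <= m (for m >= 1; q_k >= k so k <= m). *)
Definition greedy_idx (m : nat) : nat :=
  \max_(1 <= k < m.+1 | q k <= m) k.

(* Greedy decomposition (list of indices, in order of choice); fuel m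
   is sufficient since each step decreases m by at least 1. *)
Fixpoint greedy_aux (fuel m : nat) : seq nat :=
  if fuel is f.+1 then
    if m is 0 then [::]
    else greedy_idx m :: greedy_aux f (m - q (greedy_idx m))
  else [::].

Definition greedy (m : nat) : seq nat := greedy_aux m m.

Definition h (n : nat) : nat :=
  count (fun m => FQ_legal (greedy m)) (iota 1 (q n.+1 - 1)).

(* Main.v *)
Require Import Defs.
From mathcomp Require Import all_boot zify.
Set Implicit Arguments. Unset Strict Implicit. Unset Printing Implicit Defensive.

Fixpoint Q (n : nat) : nat :=
  match n with
  | S n1 => match n1 with
    | S n2 => match n2 with
      | S n3 => match n3 with
        | S n4 => match n4 with
          | S n5 => match n5 with
            | S n6 => match n6 with
              | S n7 => Q n1 + Q n5
              | 0 => 7 end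
            | 0 => 5 end
          | 0 => 4 end
        | 0 => 3 end
      | 0 => 2 end
    | 0 => 1 end
  | 0 => 0 end.

Lemma Qrec1 n : Q n.+4.+3 = Q n.+4.+2 + Q n.+2.
Proof. by []. Qed.

Lemma Qge n : n <= Q n.
Proof.
elim/ltn_ind: n => n IH.
case: n IH => [|[|[|[|[|[|[|n]]]]]]] IH //.
rewrite Qrec1.
have := IH n.+4.+2 (ltnSn _); have := IH n.+2 ltac:(lia). lia.
Qed.

Lemma Qinc n : Q n < Q n.+1.
Proof.
case: n => [|[|[|[|[|[|n]]]]]] //.
rewrite Qrec1. have := Qge n.+2. lia.
Qed.

Lemma Qhomo : {homo Q : m n / m < n}.
Proof. apply: homo_ltn; [exact: ltn_trans| exact: Qinc]. Qed.

Lemma Qle : {mono Q : m n / m <= n}.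
Proof. exact: leq_mono Qhomo. Qed.

Lemma Qlt : {mono Q : m n / m < n}.
Proof. exact: leqW_mono Qle. Qed.

Lemma Qrec2 n : Q n.+4.+2 = Q n.+4 + Q n.+3.
Proof.
elim/ltn_ind: n => n IH.
case: n IH => [|[|[|[|[|p]]]]] IH //.
rewrite Qrec1 (IH p.+4 ltac:(lia)) (IH p ltac:(lia)).
rewrite (Qrec1 p.+2) (Qrec1 p.+1). lia.
Qed.

Definition sumQ (S : seq nat) := sumn (map Q S).

Lemma legal_uniq S : FQ_legal S -> uniq S.
Proof. by case/and4P. Qed.

Lemma legal_pos S x : FQ_legal S -> x \in S -> 0 < x.
Proof. by case/and4P=> _ /allP H _ _ /H. Qed.

Lemma legal_pair S x y : FQ_legal S -> x \in S -> y \in S ->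
  [&& x - y != 1, x - y != 3 & x - y != 4].
Proof. by case/and4P=> _ _ /allP H _ /H /allP H2 /H2. Qed.

Lemma legal_13 S : FQ_legal S -> ~~ ((1 \in S) && (3 \in S)).
Proof. by case/and4P. Qed.

Lemma legal_eq S T : uniq S = uniq T -> S =i T -> FQ_legal S = FQ_legal T.
Proof.
move=> U E; rewrite /FQ_legal U !E (eq_all_r E).
congr [&& _, _ , _ & _].
rewrite (eq_all_r E); apply: eq_all => i /=; by rewrite (eq_all_r E).
Qed.

Lemma legal_subseq S T : subseq T S -> FQ_legal S -> FQ_legal T.
Proof.
move=> sub L; have ss := mem_subseq sub.
apply/and4P; split.
- exact: subseq_uniq sub (legal_uniq L).
- apply/allP=> x /ss; exact: legal_pos L.
- apply/allP=> x /ss xS; apply/allP=> y /ss yS; exact: legal_pair L xS yS.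
- apply: contra (legal_13 L) => /andP[/ss -> /ss ->]; done.
Qed.

Lemma legal_cons n s : 6 <= n -> all (fun i => i + 5 <= n) s ->
  FQ_legal (n :: s) = FQ_legal s.
Proof.
move=> n6 /allP As.
have ns : n \notin s.
  apply/negP=> /As H. move: H n6. clear. lia.
have n0 : 0 < n by move: n6; clear; lia.
have n1 : (1 == n) = false by apply/negbTE; move: n6; clear; lia.
have n3 : (3 == n) = false by apply/negbTE; move: n6; clear; lia.
have A1 : all (fun j => [&& n - j != 1, n - j != 3 & n - j != 4]) s.
  apply/allP=> j /As; clear; lia.
rewrite /FQ_legal /= ns n0 subnn /= !in_cons n1 n3 A1 /=.
congr (_ && (_ && _)).
congr (_ && _); apply: eq_in_all => i /As Hi /=.
have -> : i - n = 0 by move: Hi; clear; lia.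
done.
Qed.

Lemma sumQ_rem S x : x \in S -> sumQ S = Q x + sumQ (rem x S).
Proof.
by move=> xS; rewrite /sumQ (perm_sumn (perm_map Q (perm_to_rem xS))).
Qed.

Lemma mem_rem_leg S x y : FQ_legal S -> x \in S -> y \in rem x S ->
  [/\ y \in S, y != x, [&& x - y != 1, x - y != 3 & x - y != 4] &
      [&& y - x != 1, y - x != 3 & y - x != 4]].
Proof.
move=> L xS; rewrite (mem_rem_uniq _ (legal_uniq L)) /= => /andP[yx yS].
split => //; exact: (legal_pair L).

Qed.

Lemma legal_rem S x : FQ_legal S -> FQ_legal (rem x S).
Proof. apply: legal_subseq; exact: rem_subseq. Qed.

Lemma sublists_sub s T : T \in sublists s -> {subset T <= s}.
Proof.
elim: s T => [|x s IH] T /=; first by rewrite inE => /eqP -> .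
rewrite mem_cat => /orP[/mapP[t /IH tS ->]|/IH TS] y.
- by rewrite !inE => /orP[->|/tS ->]; rewrite ?orbT.
- by move/TS; rewrite inE => ->; rewrite orbT.
Qed.

Lemma filter_sublists (p : pred nat) s : filter p s \in sublists s.
Proof.
elim: s => [|x s IH] /=; first by rewrite inE.
rewrite mem_cat; case: (p x).
- by rewrite (map_f (cons x) IH).
- by rewrite IH orbT.
Qed.

Lemma reduce S j : FQ_legal S -> all (fun i => i <= j) S ->
  exists2 T, T \in sublists (iota 1 j) & FQ_legal T && (sumQ T == sumQ S).
Proof.
move=> L /allP Aj.
exists [seq x <- iota 1 j | x \in S]; first exact: filter_sublists.
have U : uniq [seq x <- iota 1 j | x \in S] by rewrite filter_uniq // iota_uniq.
have E : S =i [seq x <- iota 1 j | x \in S].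
  move=> x; rewrite mem_filter mem_iota; case xS: (x \in S) => //=.
  have := Aj x xS; have := legal_pos L xS; lia.
have P : perm_eq S [seq x <- iota 1 j | x \in S] by apply: uniq_perm => //; exact: legal_uniq.
rewrite (@legal_eq _ S) ?U ?(legal_uniq L) //.
  by rewrite L /sumQ (perm_sumn (perm_map Q P)) eqxx.
Qed.

Lemma check_all j (p : pred nat) :
  all (fun T => FQ_legal T ==> p (sumQ T)) (sublists (iota 1 j)) ->
  forall S, FQ_legal S -> all (fun i => i <= j) S -> p (sumQ S).
Proof.
move=> /allP H S L A; have [T Ti /andP[LT /eqP <-]] := reduce L A.
by have := H T Ti; rewrite LT.
Qed.

Lemma top_split S j : FQ_legal S -> all (fun i => i <= j) S -> j \in S ->
  [/\ FQ_legal (rem j S), sumQ S = Q j + sumQ (rem j S) &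
      forall y, y \in rem j S -> y = j - 2 \/ y + 5 <= j].
Proof.
move=> L /allP A jS; split; [exact: legal_rem | exact: sumQ_rem |].
move=> y yR; have [yS yj P1 P2] := mem_rem_leg L jS yR.
have := A y yS; move: yj P1 P2; clear; lia.
Qed.

Lemma drop_top S j : all (fun i => i <= j) S -> j \notin S ->
  all (fun i => i <= j.-1) S.
Proof.
move=> /allP A jS; apply/allP=> y yS; have := A y yS.
have : y != j by apply: contraNneq jS => <-.
clear; lia.
Qed.

Lemma Bnd j : forall S, FQ_legal S -> all (fun i => i <= j) S -> sumQ S < Q j.+3.
Proof.
elim/ltn_ind: j => j IH S L A.
case: (ltnP j 11) => [jl|jg].
  have : all (fun j => all (fun T => FQ_legal T ==> (sumQ T < Q j.+3))
     (sublists (iota 1 j))) (iota 0 11) by vm_compute.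
  move/allP => C0.
  have H := C0 j ltac:(rewrite mem_iota; lia).
  exact: (@check_all j (fun s => s < Q j.+3) H S L A).
have [k jk] : exists k, j = k.+4.+4.+3 by exists (j - 11); lia.
subst j; set j' := k.+4.+4.+3 in IH L A *.
have e1 : Q k.+4.+4.+4.+2 = Q k.+4.+4.+4.+1 + Q k.+4.+4.+1 := Qrec1 _.
have e2 : Q k.+4.+4.+4.+1 = Q k.+4.+4.+4 + Q k.+4.+4 := Qrec1 _.
have m1 : Q k.+4.+4.+3 <= Q k.+4.+4.+4 by rewrite Qle.
have m2 : Q k.+4.+3 <= Q k.+4.+4 by rewrite Qle.
case jS: (j' \in S).
  have [LR sR HR] := top_split L A jS.
  case jR: (j' - 2 \in rem j' S).
    have LR' := sumQ_rem jR.
    have sR' := @legal_rem _ (j' - 2) LR.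
    have HR' := mem_rem_leg LR jR.
    have AR' : all (fun i => i <= k.+4) (rem (j' - 2) (rem j' S)).
      apply/allP=> y yR'; have [yR yn P1 P2] := HR' y yR'.
      have := HR y yR; move: yn P1 P2; rewrite /j'; clear; lia.
    have := IH k.+4 ltac:(rewrite /j'; lia) _ sR' AR'.
    rewrite sR LR'; set X := sumQ (rem _ (rem _ _)) => h.
    rewrite (_ : j' - 2 = k.+4.+4.+1); last by rewrite /j'; lia.
    move: h; rewrite /j'; lia.
  have AR : all (fun i => i <= k.+4.+2) (rem j' S).
    apply/allP=> y yR; have := HR y yR.
    have : y != j' - 2 by apply: contraFneq jR => <-.
    rewrite /j'; clear; lia.
  have := IH k.+4.+2 ltac:(rewrite /j'; lia) _ LR AR.
  rewrite sR /j'; lia.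
have := IH k.+4.+4.+2 ltac:(rewrite /j'; lia) _ L (drop_top A (negbT jS)).
rewrite /j'; lia.
Qed.

Lemma NonRep n : forall S, FQ_legal S -> all (fun i => i <= n) S -> sumQ S != Q n.+1.
Proof.
elim/ltn_ind: n => n IH S L A.
case: (ltnP n 11) => [nl|ng].
  have : all (fun j => all (fun T => FQ_legal T ==> (sumQ T != Q j.+1))
     (sublists (iota 1 j))) (iota 0 11) by vm_compute.
  move/allP => C0.
  have H := C0 n ltac:(rewrite mem_iota; lia).
  exact: (@check_all n (fun s => s != Q n.+1) H S L A).
have [k nk] : exists k, n = k.+4.+4.+3 by exists (n - 11); lia.
subst n; set n' := k.+4.+4.+3 in IH L A *.
have e1 : Q k.+4.+4.+4 = Q k.+4.+4.+3 + Q k.+4.+3 := Qrec1 _.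
have e2 : Q k.+4.+4.+4 = Q k.+4.+4.+2 + Q k.+4.+4.+1 := Qrec2 _.
have e3 : Q k.+4.+4.+1 = Q k.+4.+4 + Q k.+4 := Qrec1 _.
have m1 : Q k.+4.+3 < Q k.+4.+4.+1 by rewrite Qlt.
have m2 : Q k.+4.+4 < Q k.+4.+4.+1 by rewrite Qlt.
apply/eqP => Hs.
case nS: (n' \in S).
  have [LR sR HR] := top_split L A nS.
  case nR: (n' - 2 \in rem n' S).
    have := sumQ_rem nR.
    rewrite (_ : n' - 2 = k.+4.+4.+1); last by rewrite /n'; lia.
    move: Hs; rewrite sR /n'; lia.
  have AR : all (fun i => i <= k.+4.+2) (rem n' S).
    apply/allP=> y yR; have := HR y yR.
    have : y != n' - 2 by apply: contraFneq nR => <-.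
    rewrite /n'; clear; lia.
  have := IH k.+4.+2 ltac:(rewrite /n'; lia) _ LR AR.
  move: Hs; rewrite sR /n' => Hs. by rewrite (_ : sumQ (rem _ S) = Q k.+4.+3) ?eqxx //; lia.
have A1 : all (fun i => i <= k.+4.+4.+2) S := drop_top A (negbT nS).
set n1 := k.+4.+4.+2 in A1.
case n1S: (n1 \in S).
  have [LR sR HR] := top_split L A1 n1S.
  case nR: (n1 - 2 \in rem n1 S).
    have sR' := sumQ_rem nR.
    have LR' := @legal_rem _ (n1 - 2) LR.
    have HR' := mem_rem_leg LR nR.
    have AR' : all (fun i => i <= k.+3) (rem (n1 - 2) (rem n1 S)).
      apply/allP=> y yR'; have [yR yn P1 P2] := HR' y yR'.
      have := HR y yR; move: yn P1 P2; rewrite /n1 /n'; clear; lia.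
    have := IH k.+3 ltac:(rewrite /n'; lia) _ LR' AR'.
    move: sR'; rewrite (_ : n1 - 2 = k.+4.+4); last by rewrite /n1 /n'; lia.
    move: Hs; rewrite sR /n1 /n' => Hs sR'.
    have e4 : Q k.+4.+4.+1 = Q k.+4.+4 + Q k.+4 := Qrec1 _.
    by rewrite (_ : sumQ (rem _ (rem _ S)) = Q k.+4) ?eqxx //; lia.
  have AR : all (fun i => i <= k.+4.+1) (rem n1 S).
    apply/allP=> y yR; have := HR y yR.
    have : y != n1 - 2 by apply: contraFneq nR => <-.
    rewrite /n1 /n'; clear; lia.
  have := Bnd LR AR.
  move: Hs; rewrite sR /n1 /n' => Hs; lia.
have A2 : all (fun i => i <= k.+4.+4.+1) S := drop_top A1 (negbT n1S).
have := Bnd L A2.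
move: Hs; rewrite /n1 /n' => Hs; lia.
Qed.

Lemma Exist n : forall m, m < Q n.+1 ->
  exists S, [/\ FQ_legal S, all (fun i => i <= n) S & sumQ S = m].
Proof.
elim/ltn_ind: n => n IH m Hm.
case: (ltnP n 11) => [nl|ng].
  have : all (fun j => all (fun m => has (fun T => FQ_legal T && (sumQ T == m))
     (sublists (iota 1 j))) (iota 0 (Q j.+1))) (iota 0 11) by vm_compute.
  move/allP => C0.
  have /allP H := C0 n ltac:(rewrite mem_iota; lia).
  have /hasP[T Ti /andP[LT /eqP sT]] := H m ltac:(rewrite mem_iota; lia).
  exists T; split => //; apply/allP=> y /(sublists_sub Ti); rewrite mem_iota; lia.
have [k nk] : exists k, n = k.+4.+4.+3 by exists (n - 11); lia.
subst n; set n' := k.+4.+4.+3 in IH Hm *.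
have e1 : Q k.+4.+4.+4 = Q k.+4.+4.+3 + Q k.+4.+3 := Qrec1 _.
case: (ltnP m (Q n')) => mn.
  have [S [L A s]] := IH n'.-1 ltac:(rewrite /n'; lia) m mn.
  exists S; split => //; apply/allP=> y /(allP A); lia.
have [S [L A s]] := IH k.+4.+2 ltac:(rewrite /n'; lia) (m - Q n')
   ltac:(move: Hm mn; rewrite /n'; lia).
exists (n' :: S); split.
- have h6 : 6 <= n' by rewrite /n'.
  have hA : all (fun i => i + 5 <= n') S.
    apply/allP => y /(allP A); rewrite /n'; lia.
  by rewrite legal_cons.
- rewrite /= leqnn /=; apply/allP => y /(allP A); rewrite /n'; lia.
- change (Q n' + sumQ S = m); rewrite s; lia.
Qed.

Lemma sublists_sum (f : nat -> nat) s T : T \in sublists s ->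
  sumn (map f T) <= sumn (map f s).
Proof.
elim: s T => [|x s IH] T /=; first by rewrite inE => /eqP ->.
rewrite mem_cat => /orP[/mapP[t /IH tS ->]|/IH TS] /=; lia.
Qed.

Lemma map_nth_iota1 (l : seq nat) :
  [seq nth 0 l i.-1 | i <- iota 1 (size l)] = l.
Proof.
rewrite -[1]/(1 + 0) iotaDl -map_comp.
rewrite (eq_map (g := nth 0 l)); first exact: (mkseq_nth 0 l).
by move=> i /=.
Qed.

Definition LQ n := mkseq (fun i => Q i.+1) n.

Lemma decomp_iff n m : decomp_with (LQ n) m <->
  exists S, [/\ FQ_legal S, all (fun i => i <= n) S & sumQ S = m].
Proof.
have Hn : forall T, T \in sublists (iota 1 n) ->
    [seq nth 0 (LQ n) i.-1 | i <- T] = map Q T.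
  move=> T Ti; apply/eq_in_map => i /(sublists_sub Ti); rewrite mem_iota => Hi.
  rewrite nth_mkseq; last lia.
  congr Q; lia.
rewrite /decomp_with size_mkseq; split.
- move/hasP=> [T Ti /andP[LT /eqP sT]]; exists T; split => //.
    apply/allP=> y /(sublists_sub Ti); rewrite mem_iota; lia.
  by rewrite -sT Hn.
- move=> [S [L A s]]; have [T Ti /andP[LT /eqP sT]] := reduce L A.
  apply/hasP; exists T => //; rewrite LT Hn // /=; apply/eqP; rewrite -s; exact: sT.
Qed.

Lemma next_LQ n : next_FQ (LQ n) = Q n.+1.
Proof.
set l := LQ n.
have Q1 : 0 < Q n.+1 by have := Qge n.+1; lia.
set K := (Q n.+1).-1.
have dK : decomp_with l K by apply/decomp_iff; apply: Exist; rewrite /K; lia.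
have KN : K <= sumn l.
  move: dK; rewrite /decomp_with => /hasP[T Ti /andP[_ /eqP <-]].
  have := sublists_sum (fun i => nth 0 l i.-1) Ti.
  by rewrite map_nth_iota1.
rewrite /next_FQ.
have -> : (sumn l).+1 = K + ((sumn l).+1 - K) by lia.
rewrite iotaD find_cat size_iota.
have -> : has (fun m => ~~ decomp_with l m) (iota 1 K) = false.
  apply/hasPn => m; rewrite mem_iota => Hm; rewrite negbK.
  apply/decomp_iff; apply: Exist; rewrite /K in Hm; lia.
have -> : (sumn l).+1 - K = ((sumn l) - K).+1 by lia.
have -> : find (fun m => ~~ decomp_with l m) (iota (1 + K) (sumn l - K).+1) = 0.
  rewrite /=.
  have -> : ~~ decomp_with l (1 + K) = true => //.
  apply/negP => /decomp_iff [S [L A s]].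
  have := NonRep L A; rewrite s /K; lia.
by rewrite addn0 /K prednK.
Qed.

Lemma FQ_list_eq n : FQ_list n = LQ n.
Proof.
elim: n => [|n IH] //=.
by rewrite IH next_LQ /LQ mkseqS.
Qed.

Lemma qQ n : q n = Q n.
Proof.
case: n => [|n] //.
by rewrite /q FQ_list_eq /LQ nth_mkseq.
Qed.

Lemma gidx_eq m n : 0 < n -> Q n <= m < Q n.+1 -> greedy_idx m = n.
Proof.
move=> n0 /andP[lo hi].
rewrite /greedy_idx (eq_bigl (fun k => Q k <= m)); last by move=> k; rewrite qQ.
apply/eqP; rewrite eqn_leq; apply/andP; split.
- apply/bigmax_leqP_seq => i _ Qi.
  have : Q i < Q n.+1 by lia.
  by rewrite Qlt.
- apply: (@leq_bigmax_seq _ _ _ (fun k => k) n) => //.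
  rewrite mem_index_iota; have := Qge n; lia.
Qed.

Lemma bracket_aux N : forall m, 0 < m < Q N.+2 -> exists2 n, 0 < n & Q n <= m < Q n.+1.
Proof.
elim: N => [|N IH] x Hx.
  exists 1 => //.
case: (ltnP x (Q N.+2)) => h.
  apply: IH; lia.
exists N.+2 => //.
by rewrite h; lia.
Qed.

Lemma bracket m : 0 < m -> exists2 n, 0 < n & Q n <= m < Q n.+1.
Proof.
move=> m0; apply: (bracket_aux (N := m)).
have := Qge m.+2; lia.
Qed.

Lemma gidx_props m : 0 < m ->
  [/\ 0 < greedy_idx m, Q (greedy_idx m) <= m & m < Q (greedy_idx m).+1].
Proof.
move=> m0; have [n n0 Hn] := bracket m0.
rewrite (gidx_eq n0 Hn); case/andP: Hn => *; split => //.
Qed.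

Lemma fuel f f' m : m <= f -> m <= f' -> greedy_aux f m = greedy_aux f' m.
Proof.
elim: f f' m => [|f IH] [|f'] [|m] //= h1 h2.
congr (_ :: _); apply: IH.
- have [a b c] := gidx_props (ltn0Sn m); rewrite qQ; have := Qge (greedy_idx m.+1); lia.
- have [a b c] := gidx_props (ltn0Sn m); rewrite qQ; have := Qge (greedy_idx m.+1); lia.
Qed.

Lemma greedyE m : 0 < m ->
  greedy m = greedy_idx m :: greedy (m - Q (greedy_idx m)).
Proof.
case: m => [|m] // _.
rewrite /greedy /= qQ; congr (_ :: _); apply: fuel => //.
have [a b c] := gidx_props (ltn0Sn m); have := Qge (greedy_idx m.+1); lia.
Qed.

Lemma greedy0 : greedy 0 = [::].
Proof. by []. Qed.

Lemma greedy_bound r j : r < Q j.+1 -> all (fun i => i <= j) (greedy r).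
Proof.
elim/ltn_ind: r => r IH Hr.
case: r IH Hr => [|r] IH Hr; first by rewrite greedy0.
rewrite greedyE //=.
have [a b c] := gidx_props (ltn0Sn r).
apply/andP; split.
  have : Q (greedy_idx r.+1) < Q j.+1 by lia.
  by rewrite Qlt.
apply: IH; have := Qge (greedy_idx r.+1); lia.
Qed.

Lemma greedy_small m : 0 < m <= 5 -> greedy m = [:: m].
Proof.
move=> Hm.
have [QmE QmS] : Q m = m /\ m < Q m.+1 by case: m Hm => [|[|[|[|[|[|m]]]]]].
rewrite greedyE; last lia.
rewrite (@gidx_eq m m); [|lia|]; last by rewrite QmE leqnn QmS.
by rewrite QmE subnn.
Qed.

Lemma legal1 m : 0 < m -> FQ_legal [:: m].
Proof.
move=> m0; rewrite /FQ_legal /= subnn m0 /= !inE.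
by apply/negP => /andP[/eqP <-].
Qed.

Lemma count_small k : k <= 5 ->
  count (fun m => FQ_legal (greedy m)) (iota 1 k) = k.
Proof.
move=> Hk.
rewrite (eq_in_count (a2 := predT)); first by rewrite count_predT size_iota.
move=> m; rewrite mem_iota => Hm.
rewrite greedy_small; last lia.
by rewrite legal1 //; lia.
Qed.

Lemma greedy6 : greedy 6 = [:: 5; 1].
Proof.
rewrite greedyE // (@gidx_eq 6 5) //.
by rewrite (_ : 6 - Q 5 = 1) // greedy_small.
Qed.

Lemma h_small k : 1 <= k <= 5 -> h k = k.
Proof.
move=> Hk; rewrite /h qQ.
case: (ltnP k 5) => k5.
  have e : Q k.+1 - 1 = k.
    by move: Hk k5; case: k => [|[|[|[|[|[|k]]]]]].
  by rewrite e count_small //; lia.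
have -> : k = 5 by lia.
rewrite (_ : Q 6 - 1 = 5 + 1) // iotaD count_cat count_small //=.
by rewrite greedy6.
Qed.

Lemma h_rec n : 6 <= n -> h n = h n.-1 + h (n - 5) + 1.
Proof.
move=> n6.
have e : Q n.+1 = Q n + Q (n - 4).
  have [k ->] : exists k, n = k.+4.+2 by exists (n - 6); lia.
  rewrite Qrec1; congr (_ + Q _); lia.
have Qn := Qge n; have Qn4 := Qge (n - 4).
rewrite /h !qQ (_ : n.-1.+1 = n); last lia.
rewrite (_ : (n - 5).+1 = n - 4); last lia.
rewrite (_ : Q n.+1 - 1 = (Q n - 1) + Q (n - 4)); last lia.
rewrite iotaD count_cat (_ : 1 + (Q n - 1) = Q n + 0); last lia.
rewrite iotaDl count_map -addnA; congr (_ + _).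
rewrite (eq_in_count (a2 := fun r => FQ_legal (greedy r))); last first.
  move=> r; rewrite mem_iota => Hr /=.
  rewrite greedyE; last lia.
  rewrite (@gidx_eq _ n); last (apply/andP; split; lia); last lia.
  rewrite (_ : Q n + r - Q n = r); last lia.
  rewrite legal_cons //.
  have := @greedy_bound r (n - 5) ltac:(rewrite (_ : (n - 5).+1 = n - 4); lia).
  move/allP=> B; apply/allP=> y /B; lia.
rewrite (_ : Q (n - 4) = (Q (n - 4) - 1).+1); last lia.
set x := Q (n - 4) - 1.
by rewrite [iota 0 _]/= subn1 /= addnC.
Qed.

Theorem mainTheorem13 :
  (forall k : nat, 1 <= k <= 5 -> h k = k) /\
  (forall n : nat, 6 <= n -> h n = h n.-1 + h (n - 5) + 1).
Proof.
split; [exact: h_small | exact: h_rec].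
Qed.
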